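(* Let $x\neq0$ with $r(x)\neq0$, let $p\neq0$, and let $S=[s^{(1)},\dots,s^{(k)}]\in\mathbb C^{n\times k}$ satisfy $p^{\mathrm H}r(x)\neq0$ and $S^{\mathrm H}r(x)=0$. Suppose $[x,\ p,\ S]$ has full column rank, and that $(\alpha_{\mathrm{opt}},b_{\mathrm{opt}})$ is a stationary point of the function $(\alpha,b)\mapsto\rho\big(x+\alpha(I-P_{x,\rho(x_{\mathrm{opt}}),\rho(x)})[p+Sb]\big)$, where $$s=p+Sb_{\mathrm{opt}},\quad d=\alpha_{\mathrm{opt}}(I-P_{x,\rho(x_{\mathrm{opt}}),\rho(x)})s,\quad x_{\mathrm{opt}}=x+d.$$ Write $r_{\mathrm{opt}}=r(x_{\mathrm{opt}})$ and $\check F:=\check F_{\rho(x_{\mathrm{opt}}),\rho(x)}(\rho(x_{\mathrm{opt}});x)$. Then, in the nontrivial case $x_{\mathrm{opt}}\neq x$, and provided $x^{\mathrm H}\Phi(\rho(x_{\mathrm{opt}}),\rho(x))x\neq0$ and $s^{\mathrm H}\check Fs\neq0$: $\alpha_{\mathrm{opt}}\neq0$, $r_{\mathrm{opt}}\perp\mathrm{span}\{x,p,S,s,d\}$, and $$\alpha_{\mathrm{opt}}=-\frac{p^{\mathrm H}r(x)}{s^{\mathrm H}\check Fs}=-\frac{d^{\mathrm H}F(\rho(x_{\mathrm{opt}}))d}{r(x)^{\mathrm H}p},$$ $$\rho(x_{\mathrm{opt}})-\rho(x)=\frac{|r(x)^{\mathrm H}p|^2}{[x^{\mathrm H}\Phi(\rho(x_{\mathrm{opt}}),\rho(x))x][s^{\mathrm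 H}\check Fs]}=\frac{d^{\mathrm H}F(\rho(x_{\mathrm{opt}}))d}{x^{\mathrm H}\Phi(\rho(x_{\mathrm{opt}}),\rho(x))x},$$ $$r(x_{\mathrm{opt}})-r(x)=\check Fd,$$ $$b_{\mathrm{opt}}=-\big[S^{\mathrm H}\check FS\big]^{\dagger}S^{\mathrm H}\check Fp+v,$$ where $v$ is a vector satisfying $\check FSv\perp\mathrm{span}\{x,p,S,s,d\}$ and $\dagger$ denotes the Moore–Penrose inverse. Moreover, the four displayed formulas also hold in the trivial case $\alpha_{\mathrm{opt}}=0$, $d=0$, $x_{\mathrm{opt}}=x$, $\rho(x_{\mathrm{opt}})=\rho(x)$, $r(x_{\mathrm{opt}})=r(x)$.
   Context: Setting: $F(\lambda)=\sum_{k=0}^m A_k\lambda^{m-k}$ with Hermitian $A_k\in\mathbb C^{n\times n}$; $\mathcal I=(\lambda_-,\lambda_+)$ with $F(\lambda_-)$ negative definite. For $x$ such that $x^{\mathrm H}F(\lambda)x=0$ has a root in $\mathcal I$, it is assumed $\sigma(x):=x^{\mathrm H}F'(\rho(x))x>0$, so the root is unique and denoted $\rho(x)$ (Rayleigh quotient); all vectors at which $\rho$ is evaluated are assumed to be of this type. Residual: $r(x)=F(\rho(x))x$ (so $x^{\mathrm H}r(x)=0$ and $r(x)=-\tfrac12\sigma(x)\nabla\rho(x)$). Divided difference: $\Phi(\rho_1,\rho_2)=\frac{F(\rho_1)-F(\rho_2)}{\rho_1-\rho_2}$. Oblique projection: $P_{x,\rho_1,\rho_2}=\frac{xx^{\mathrm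 H}\Phi(\rho_1,\rho_2)}{x^{\mathrm H}\Phi(\rho_1,\rho_2)x}$. Projected polynomial: $\check F_{\rho_1,\rho_2}(\rho;x)=(I-P_{x,\rho_1,\rho_2}^{\mathrm H})F(\rho)(I-P_{x,\rho_1,\rho_2})$. *)

(* Defs.v *)
From HB Require Import structures.
From mathcomp Require Import all_boot all_order all_algebra.
From mathcomp Require Import complex.
From mathcomp Require Import all_classical all_reals all_analysis.
From Stdlib Require Import ClassicalEpsilon.

Set Implicit Arguments.
Unset Strict Implicit.
Unset Printing Implicit Defensive.

Import Order.TTheory GRing.Theory Num.Theory.
Import numFieldNormedType.Exports.
Local Open Scope ring_scope.
Local Open Scope complex_scope.

Section Defs.
Variable R : realType.
Local Notation C := R[i].

Definition hc p q (M : 'M[C]_(p, q)) : 'M[C]_(q, p) := (map_mx conjc M)^T.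

Definition ip n (u v : 'cV[C]_n) : C := (hc u *m v) 0 0.
Definition qf n (M : 'M[C]_n) (y : 'cV[C]_n) : C := (hc y *m M *m y) 0 0.

Variables (n m : nat) (A : 'I_m.+1 -> 'M[C]_n).

Definition Fpoly (lam : R) : 'M[C]_n :=
  \sum_(k < m.+1) ((lam ^+ (m - k))%:C) *: A k.

Definition dFpoly (lam : R) : 'M[C]_n :=
  \sum_(k < m.+1) ((((m - k)%:R * lam ^+ (m - k).-1) : R)%:C) *: A k.

(** Divided difference Phi(r1,r2); for r1 = r2 the (limit) value F'(r1). *)
Definition Phi (r1 r2 : R) : 'M[C]_n :=
  if r1 == r2 then dFpoly r1 else ((r1 - r2)^-1)%:C *: (Fpoly r1 - Fpoly r2).

Definition inI (lm : R) (lp : \bar R) (lam : R) : Prop :=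
  lm < lam /\ (lam%:E < lp)%E.

(** Rayleigh functional rho(y): the root of y^H F(lam) y = 0 in I
    (chosen by Hilbert's epsilon; it is unique under the standing assumptions). *)
Definition rho (lm : R) (lp : \bar R) (y : 'cV[C]_n) : R :=
  epsilon (inhabits 0) (fun lam => inI lm lp lam /\ qf (Fpoly lam) y = 0).

Definition resid lm lp (y : 'cV[C]_n) : 'cV[C]_n := Fpoly (rho lm lp y) *m y.

Definition Proj (x : 'cV[C]_n) (r1 r2 : R) : 'M[C]_n :=
  (qf (Phi r1 r2) x)^-1 *: (x *m hc x *m Phi r1 r2).

Definition Fcheck (r1 r2 lam : R) (x : 'cV[C]_n) : 'M[C]_n :=
  (1%:M - hc (Proj x r1 r2)) *m Fpoly lam *m (1%:M - Proj x r1 r2).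

End Defs.

Definition orth_span (R : realType) n k (x p : 'cV[R[i]]_n) (S : 'M[R[i]]_(n, k))
    (s d w : 'cV[R[i]]_n) : Prop :=
  [/\ ip x w = 0, ip p w = 0, hc S *m w = 0, ip s w = 0 & ip d w = 0].

Definition MPinverse (R : realType) k (M X : 'M[R[i]]_k) : Prop :=
  [/\ M *m X *m M = M, X *m M *m X = X,
      hc (M *m X) = M *m X & hc (X *m M) = X *m M].

Definition stationary (R : realType) k (f : R[i] -> 'cV[R[i]]_k -> R)
    (a0 : R[i]) (b0 : 'cV[R[i]]_k) : Prop :=
  forall (da : R[i]) (db : 'cV[R[i]]_k),
    is_derive (0 : R) (1 : R)
      (fun t : R => f (a0 + t%:C * da) (b0 + t%:C *: db)) 0.

(* Main.v *)
Require Import Defs.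
From HB Require Import structures.
From mathcomp Require Import all_boot all_order all_algebra.
From mathcomp Require Import complex.
From mathcomp Require Import all_classical all_reals all_analysis.
From mathcomp Require Import ring.
Set Implicit Arguments.
Unset Strict Implicit.
Unset Printing Implicit Defensive.
Import Order.TTheory GRing.Theory Num.Theory.
Local Open Scope ring_scope.
Local Open Scope complex_scope.

Lemma deriv_key (R : realType) (m : nat) (rf : R -> R) (c : 'I_m.+1 -> {poly R}) :
  is_derive (0:R) (1:R) rf 0 ->
  (forall t, \sum_(k < m.+1) rf t ^+ (m - k) * (c k).[t] = 0) ->
  \sum_(k < m.+1) rf 0 ^+ (m - k) * (deriv (c k)).[0] = 0.
Proof.
move=> hd h0.
have H := @is_derive_sum R R R m.+1 (fun k => rf ^+ (m - k) * horner (c k)) 0 1 _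
  (fun k => is_deriveM (is_deriveX (m - k) hd) (is_derive_poly (c k) 0)).
have E : (\sum_(k < m.+1) (rf ^+ (m - k) * horner (c k))) = cst 0.
  rewrite fct_sumE; apply/funext => t /=.
  rewrite /cst; transitivity (\sum_(k < m.+1) rf t ^+ (m - k) * (c k).[t]); last exact: h0 t.
  by apply: eq_bigr => k _; rewrite exprfctE.
rewrite E in H.
have := @derive_val _ _ _ _ _ _ _ H.
rewrite derive_cst => /esym.
move=> hD; rewrite -[RHS]hD; apply: eq_bigr => k _.
by rewrite scaler0 scaler0 addr0 exprfctE /=.
Qed.

Section Basic.
Variable R : realType.
Local Notation C := R[i].
Local Notation Re := (@complex.Re R).
Local Notation Im := (@complex.Im R).

Lemma hcD p q (M N : 'M[C]_(p,q)) : hc (M + N) = hc M + hc N.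
Proof. by apply/matrixP=> i j; rewrite !mxE rmorphD. Qed.
Lemma hcN p q (M : 'M[C]_(p,q)) : hc (- M) = - hc M.
Proof. by apply/matrixP=> i j; rewrite !mxE rmorphN. Qed.
Lemma hcB p q (M N : 'M[C]_(p,q)) : hc (M - N) = hc M - hc N.
Proof. by rewrite hcD hcN. Qed.
Lemma hcZ p q c (M : 'M[C]_(p,q)) : hc (c *: M) = conjc c *: hc M.
Proof. by apply/matrixP=> i j; rewrite !mxE rmorphM. Qed.
Lemma hcM p q r (M : 'M[C]_(p,q)) (N : 'M[C]_(q,r)) : hc (M *m N) = hc N *m hc M.
Proof. apply/matrixP=> i j; rewrite !mxE rmorph_sum; apply: eq_bigr => l _; by rewrite !mxE rmorphM mulrC. Qed.
Lemma hcK p q (M : 'M[C]_(p,q)) : hc (hc M) = M.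
Proof. by apply/matrixP => i j; rewrite !mxE conjcK. Qed.
Lemma hc1 p : hc (1%:M : 'M[C]_p) = 1%:M.
Proof. by apply/matrixP=> i j; rewrite !mxE eq_sym conjc_nat. Qed.
Lemma hc0 p q : hc (0 : 'M[C]_(p,q)) = 0.
Proof. by apply/matrixP=> i j; rewrite !mxE rmorph0. Qed.
Lemma hc_sum p q I (r : seq I) (P : pred I) (F : I -> 'M[C]_(p,q)) :
  hc (\sum_(i <- r | P i) F i) = \sum_(i <- r | P i) hc (F i).
Proof. by elim/big_rec2: _ => [|i x y _ <-]; rewrite ?hc0 ?hcD. Qed.
Lemma hc_entry p q (M : 'M[C]_(p,q)) i j : hc M j i = conjc (M i j).
Proof. by rewrite !mxE. Qed.

Lemma ip_conj n (u v : 'cV[C]_n) : conjc (ip u v) = ip v u.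
Proof. by rewrite /ip -hc_entry hcM hcK. Qed.
Lemma ipDl n (u v w : 'cV[C]_n) : ip (u + v) w = ip u w + ip v w.
Proof. by rewrite /ip hcD mulmxDl mxE. Qed.
Lemma ipDr n (u v w : 'cV[C]_n) : ip w (u + v) = ip w u + ip w v.
Proof. by rewrite /ip mulmxDr mxE. Qed.
Lemma ipZl n c (u w : 'cV[C]_n) : ip (c *: u) w = conjc c * ip u w.
Proof. by rewrite /ip hcZ -scalemxAl mxE. Qed.
Lemma ipZr n c (u w : 'cV[C]_n) : ip w (c *: u) = c * ip w u.
Proof. by rewrite /ip -scalemxAr mxE. Qed.
Lemma ipNr n (u w : 'cV[C]_n) : ip w (- u) = - ip w u.
Proof. by rewrite /ip mulmxN mxE. Qed.
Lemma ipBr n (u v w : 'cV[C]_n) : ip w (u - v) = ip w u - ip w v.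
Proof. by rewrite ipDr ipNr. Qed.
Lemma ipNl n (u w : 'cV[C]_n) : ip (- u) w = - ip u w.
Proof. by rewrite /ip hcN mulNmx mxE. Qed.
Lemma ipBl n (u v w : 'cV[C]_n) : ip (u - v) w = ip u w - ip v w.
Proof. by rewrite ipDl ipNl. Qed.
Lemma ip0r n (u : 'cV[C]_n) : ip u 0 = 0.
Proof. by rewrite /ip mulmx0 mxE. Qed.
Lemma ip0l n (u : 'cV[C]_n) : ip 0 u = 0.
Proof. by rewrite /ip hc0 mul0mx mxE. Qed.
Lemma ip_mull n k (M : 'M[C]_(n,k)) (u : 'cV[C]_k) (v : 'cV[C]_n) : ip (M *m u) v = ip u (hc M *m v).
Proof. by rewrite /ip hcM mulmxA. Qed.
Lemma qfE n (M : 'M[C]_n) y : qf M y = ip y (M *m y).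
Proof. by rewrite /qf /ip mulmxA. Qed.
Lemma conjc_realE (r : R) : conjc (r%:C) = r%:C.
Proof. by rewrite /conjc /= oppr0. Qed.
Definition Bf n (M : 'M[C]_n) (u v : 'cV[C]_n) : C := (hc u *m M *m v) 0 0.


Lemma BDl n (M : 'M[C]_n) (u v w : 'cV[C]_n) : Bf M (u + v) w = Bf M u w + Bf M v w.
Proof. by rewrite /Bf hcD !mulmxDl mxE. Qed.
Lemma BDr n (M : 'M[C]_n) (u v w : 'cV[C]_n) : Bf M w (u + v) = Bf M w u + Bf M w v.
Proof. by rewrite /Bf mulmxDr mxE. Qed.
Lemma BZl n (M : 'M[C]_n) c (u w : 'cV[C]_n) : Bf M (c *: u) w = conjc c * Bf M u w.
Proof. by rewrite /Bf hcZ -!scalemxAl mxE. Qed.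
Lemma BZr n (M : 'M[C]_n) c (u w : 'cV[C]_n) : Bf M w (c *: u) = c * Bf M w u.
Proof. by rewrite /Bf -scalemxAr mxE. Qed.


Lemma conjc_realX (r : R) j : conjc ((r%:C) ^+ j) = r%:C ^+ j.
Proof. by rewrite -rmorphXn conjc_realE. Qed.

Lemma qf_expand n (M : 'M[C]_n) (y0 w1 w2 : 'cV[C]_n) (t : R) :
  qf M (y0 + t%:C *: w1 + (t%:C ^+ 2) *: w2) =
  Bf M y0 y0 + t%:C * (Bf M y0 w1 + Bf M w1 y0)
  + t%:C ^+ 2 * (Bf M w1 w1 + Bf M y0 w2 + Bf M w2 y0)
  + t%:C ^+ 3 * (Bf M w1 w2 + Bf M w2 w1) + t%:C ^+ 4 * Bf M w2 w2.
Proof.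
rewrite -[qf M _]/(Bf M _ _) !BDl !BDr !BZl !BZr conjc_realX conjc_realE.
ring.
Qed.

Lemma ReD (z w : C) : Re (z + w) = Re z + Re w.
Proof. by case: z => a b; case: w => c d. Qed.
Lemma ReMr (r : R) (z : C) : Re (r%:C * z) = r * Re z.
Proof. by case: z => a b /=; rewrite mul0r subr0. Qed.

Definition cpoly n (M : 'M[C]_n) (y0 w1 w2 : 'cV[C]_n) : {poly R} :=
  (Re (Bf M y0 y0))%:P + Re (Bf M y0 w1 + Bf M w1 y0) *: 'X
  + Re (Bf M w1 w1 + Bf M y0 w2 + Bf M w2 y0) *: 'X^2
  + Re (Bf M w1 w2 + Bf M w2 w1) *: 'X^3 + Re (Bf M w2 w2) *: 'X^4.

Lemma cpolyE n (M : 'M[C]_n) y0 w1 w2 t :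
  (cpoly M y0 w1 w2).[t] = Re (qf M (y0 + t%:C *: w1 + (t%:C ^+ 2) *: w2)).
Proof.
rewrite qf_expand /cpoly !hornerE !ReD -!rmorphXn !ReMr /=.
ring.
Qed.

Lemma cpoly_deriv n (M : 'M[C]_n) y0 w1 w2 :
  (deriv (cpoly M y0 w1 w2)).[0] = Re (Bf M y0 w1 + Bf M w1 y0).
Proof.
rewrite /cpoly !derivD derivC !derivZ derivX !derivXn !hornerE /=.
by rewrite !expr0n /= !addr0 !mulr0 !addr0.
Qed.
Lemma Re_all (w : C) : (forall z, Re (z * w) = 0) -> w = 0.
Proof.
case: w => a b h.
have := h 1; rewrite mul1r /= => ha.
have := h (0 +i* 1); rewrite /= mul0r mul1r sub0r => /eqP; rewrite oppr_eq0 => /eqP hb.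
by rewrite ha hb.
Qed.

Lemma conjcMz (z : C) : conjc z * z = (Re z ^+ 2 + Im z ^+ 2)%:C.
Proof.
case: z => a b /=. apply/eqP; rewrite eq_complex /=; apply/andP; split; apply/eqP; ring.
Qed.

Lemma ip_self0 n (y : 'cV[C]_n) : ip y y = 0 -> y = 0.
Proof.
rewrite /ip mxE.
under eq_bigr do rewrite !mxE conjcMz.
rewrite -rmorph_sum => -[] /eqP; rewrite psumr_eq0 => [/allP hall|i _]; last first.
  by rewrite addr_ge0 // sqr_ge0.
apply/matrixP => i j; rewrite (ord1 j) mxE.
have /implyP := hall i (mem_index_enum i).
move=> /(_ isT); rewrite paddr_eq0 ?sqr_ge0 // !sqrf_eq0 => /andP[/eqP ha /eqP hb].
by case: (y i 0) ha hb => a b /= -> ->.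
Qed.
End Basic.
Section FP.
Variable R : realType.
Local Notation C := R[i].
Local Notation Re := (@complex.Re R).
Variables (n m : nat) (A : 'I_m.+1 -> 'M[C]_n).
Hypothesis hA : forall j, hc (A j) = A j.

Lemma hcF l : hc (Fpoly A l) = Fpoly A l.
Proof. by rewrite /Fpoly hc_sum; apply: eq_bigr => k _; rewrite hcZ conjc_realE hA. Qed.
Lemma hcdF l : hc (dFpoly A l) = dFpoly A l.
Proof. by rewrite /dFpoly hc_sum; apply: eq_bigr => k _; rewrite hcZ conjc_realE hA. Qed.
Lemma hcPhi a b : hc (Phi A a b) = Phi A a b.
Proof. by rewrite /Phi; case: eqP => _; rewrite ?hcdF // hcZ conjc_realE hcB !hcF. Qed.
Lemma Fdiff a b : Fpoly A a - Fpoly A b = (a - b)%:C *: Phi A a b.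
Proof.
rewrite /Phi; case: eqP => [->|/eqP ne]; first by rewrite !subrr scale0r.
by rewrite scalerA -rmorphM divff ?subr_eq0 // scale1r.
Qed.
Lemma BF l u v : Bf (Fpoly A l) u v = \sum_(k < m.+1) (l ^+ (m-k))%:C * Bf (A k) u v.
Proof.
rewrite /Bf /Fpoly mulmx_sumr mulmx_suml summxE; apply: eq_bigr => k _.
by rewrite -scalemxAr -scalemxAl mxE.
Qed.
Lemma Re_sum I (r : seq I) (P : pred I) (f : I -> C) :
  Re (\sum_(i <- r | P i) f i) = \sum_(i <- r | P i) Re (f i).
Proof. by elim/big_rec2: _ => // i x y _ <-; rewrite ReD. Qed.
Lemma Bf_conj k (M : 'M[C]_k) u v : conjc (Bf M u v) = Bf (hc M) v u.
Proof. by rewrite /Bf -hc_entry !hcM hcK mulmxA. Qed.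
Lemma Re_conj (z : C) : Re (conjc z) = Re z.
Proof. by case: z. Qed.

Lemma stat_key (y0 w1 w2 : 'cV[C]_n) (rf : R -> R) :
  is_derive (0:R) (1:R) rf 0 ->
  (forall t, qf (Fpoly A (rf t)) (y0 + t%:C *: w1 + (t%:C ^+ 2) *: w2) = 0) ->
  Re (ip (Fpoly A (rf 0) *m y0) w1) = 0.
Proof.
move=> hd h0.
have := @deriv_key R m rf (fun k => cpoly (A k) y0 w1 w2) hd.
have H1 : forall t, \sum_(k < m.+1) rf t ^+ (m - k) * (cpoly (A k) y0 w1 w2).[t] = 0.
  move=> t; transitivity (Re (qf (Fpoly A (rf t)) (y0 + t%:C *: w1 + (t%:C ^+ 2) *: w2))); last by rewrite h0.
  rewrite -[qf _ _]/(Bf _ _ _) BF Re_sum.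
  by apply: eq_bigr => k _; rewrite cpolyE ReMr.
move=> /(_ H1).
rewrite (eq_bigr (fun k : 'I_m.+1 => (rf 0 ^+ (m - k) * Re (Bf (A k) y0 w1)) *+ 2)); last first.
  by move=> k _; rewrite cpoly_deriv ReD -{2}(hA k) -Bf_conj Re_conj -mulr2n mulrnAr.
rewrite sumrMnl => /eqP; rewrite mulrn_eq0 /= => /eqP h2.
rewrite ip_mull hcF /ip mulmxA -/(Bf (Fpoly A (rf 0)) y0 w1) BF Re_sum -[RHS]h2.
by apply: eq_bigr => k _; rewrite ReMr.
Qed.
End FP.


Section More.
Variable R : realType.
Local Notation C := R[i].
Lemma BMB n (M N : 'M[C]_n) u v : Bf (M - N) u v = Bf M u v - Bf N u v.
Proof. by rewrite /Bf mulmxBr mulmxBl !mxE. Qed.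
Lemma BMZ n c (M : 'M[C]_n) u v : Bf (c *: M) u v = c * Bf M u v.
Proof. by rewrite /Bf -scalemxAr -scalemxAl mxE. Qed.
Lemma mx_scal_mul n (x : 'cV[C]_n) (u : 'rV[C]_n) (v : 'cV[C]_n) :
  x *m u *m v = (u *m v) 0 0 *: x.
Proof. by rewrite -mulmxA {1}[u *m v]mx11_scalar mul_mx_scalar. Qed.
Lemma normCK' (z : C) : `|z| ^+ 2 = z * conjc z.
Proof. by rewrite -add_Re2_Im2 -conjcMz mulrC. Qed.
Lemma conjcN' (z : C) : conjc (- z) = - conjc z.
Proof. exact: rmorphN. Qed.
Lemma conjcM' (z w : C) : conjc (z * w) = conjc z * conjc w.
Proof. exact: rmorphM. Qed.
End More.



From Stdlib Require Import ClassicalEpsilon.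

Unset Implicit Arguments.

Theorem theorem2p2 (R : realType) (n m k : nat)
  (A : 'I_m.+1 -> 'M[R[i]]_n) (lm : R) (lp : \bar R)
  (x p : 'cV[R[i]]_n) (S : 'M[R[i]]_(n, k))
  (alpha : R[i]) (b : 'cV[R[i]]_k) (mu : R) :
  (* standing assumptions *)
  (forall j, hc (A j) = A j) ->
  (lm%:E < lp)%E ->
  (forall y : 'cV[R[i]]_n, y != 0 -> qf (Fpoly A lm) y < 0) ->
  (forall (y : 'cV[R[i]]_n) (lam : R), y != 0 -> inI lm lp lam ->
     qf (Fpoly A lam) y = 0 -> 0 < qf (dFpoly A lam) y) ->
  (* hypotheses of the theorem *)
  x != 0 -> resid A lm lp x != 0 -> p != 0 ->
  ip p (resid A lm lp x) != 0 ->
  hc S *m resid A lm lp x = 0 ->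
  \rank (row_mx (row_mx x p) S) = (1 + 1 + k)%N ->
  let rx := rho A lm lp x in
  let P := Proj A x mu rx in
  let g := fun (a : R[i]) (c : 'cV[R[i]]_k) =>
             x + a *: ((1%:M - P) *m (p + S *m c)) in
  (* rho is evaluated only at vectors having a root in I *)
  (forall a c, exists lam, inI lm lp lam /\ qf (Fpoly A lam) (g a c) = 0) ->
  let s := p + S *m b in
  let d := alpha *: ((1%:M - P) *m s) in
  let xopt := x + d in
  (* self-consistency: the projector uses rho(x_opt) *)
  mu = rho A lm lp xopt ->
  stationary (fun a c => rho A lm lp (g a c)) alpha b ->
  let r := resid A lm lp x in
  let ropt := resid A lm lp xopt in
  let Fc := Fcheck A mu rx mu x in
  let Ph := qf (Phi A mu rx) x in
  let formulas :=
    [/\ alpha = - ip p r / qf Fc s /\ alpha = - qf (Fpoly A mu) d / ip r p,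
        (mu - rx)%:C = `|ip r p| ^+ 2 / (Ph * qf Fc s)
          /\ (mu - rx)%:C = qf (Fpoly A mu) d / Ph,
        ropt - r = Fc *m d &
        forall X : 'M[R[i]]_k, MPinverse (hc S *m Fc *m S) X ->
          exists v : 'cV[R[i]]_k,
            b = - (X *m hc S *m Fc *m p) + v /\ orth_span x p S s d (Fc *m S *m v)] in
  (xopt != x -> Ph != 0 -> qf Fc s != 0 ->
     [/\ alpha != 0, orth_span x p S s d ropt & formulas])
  /\ (xopt = x -> formulas).
Proof.
move=> hA _ _ _ _ _ _ hpr hSr _ rx P g hex s d xopt hmu hstat r ropt Fc Ph formulas.
set F := Fpoly A mu; set F0 := Fpoly A rx; set Phm := Phi A mu rx.
set Q := 1%:M - P.
set v1 := Q *m s.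
have rootg a c : qf (Fpoly A (rho A lm lp (g a c))) (g a c) = 0.
  by rewrite /rho; case: (epsilon_spec (inhabits 0) _ (hex a c)).
have hq0 : qf F0 x = 0.
  by have := rootg 0 0; rewrite /g scale0r addr0.
have hgx : g alpha b = xopt by [].
have hqopt : qf F xopt = 0.
  by have := rootg alpha b; rewrite hgx -hmu.
have hropt : ropt = F *m xopt by rewrite /ropt /resid -hmu.
have hr : r = F0 *m x by [].
have hxr0 : ip x r = 0 by rewrite hr -qfE.
have Pv v : P *m v = (Ph^-1 * ip x (Phm *m v)) *: x.
  by rewrite /P /Proj -scalemxAl -(mulmxA x) mx_scal_mul scalerA /ip mulmxA.
have hPv v : hc P *m v = (conjc (Ph^-1) * ip x v) *: (Phm *m x).
  by rewrite /P /Proj hcZ !hcM hcK hcPhi // -scalemxAl mulmxA mx_scal_mul scalerA.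
have gexp (t : R) (da : R[i]) (db : 'cV[R[i]]_k) :
    g (alpha + t%:C * da) (b + t%:C *: db) =
    xopt + t%:C *: (da *: v1 + alpha *: (Q *m (S *m db))) + (t%:C ^+ 2) *: (da *: (Q *m (S *m db))).
  have e1 : Q *m (p + S *m (b + t%:C *: db)) = v1 + t%:C *: (Q *m (S *m db)).
    by rewrite [S *m _]mulmxDr -scalemxAr addrA mulmxDr -scalemxAr.
  rewrite /g -/Q e1 /xopt /d -/Q -/v1 -!addrA; congr (x + _).
  rewrite scalerDl !scalerDr !scalerA -!addrA; congr (_ + _).
  rewrite addrCA; congr (_ + (_ + _)); congr (_ *: _); ring.
have hst da db : complex.Re (ip ropt (da *: v1 + alpha *: (Q *m (S *m db)))) = 0.
  have hd := hstat da db.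
  have := @stat_key R n m A hA xopt (da *: v1 + alpha *: (Q *m (S *m db)))
    (da *: (Q *m (S *m db))) _ hd.
  have e0 : (fun t : R => rho A lm lp (g (alpha + t%:C * da) (b + t%:C *: db))) 0 = mu.
    rewrite (_ : (0:R)%:C = 0) // mul0r addr0 scale0r addr0.
    by rewrite hgx hmu.
  move=> H.
  have H2 : forall t : R, qf (Fpoly A (rho A lm lp (g (alpha + t%:C * da) (b + t%:C *: db))))
      (xopt + t%:C *: (da *: v1 + alpha *: (Q *m (S *m db))) + t%:C ^+ 2 *: (da *: (Q *m (S *m db)))) = 0.
    move=> t; rewrite -gexp; exact: rootg.
  move: (H H2); rewrite e0 -hropt //.
have h1 : ip ropt v1 = 0.
  apply: Re_all => z; have := hst z 0.
  by rewrite mulmx0 mulmx0 scaler0 addr0 ipZr.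
have h2 db : complex.Re (alpha * ip ropt (Q *m (S *m db))) = 0.
  by have := hst 0 db; rewrite scale0r add0r ipZr.
have hxo : ip xopt ropt = 0 by rewrite hropt -qfE.
have hv1o : ip v1 ropt = 0 by rewrite -ip_conj h1 conjc0.
have hdo : ip d ropt = 0 by rewrite /d ipZl hv1o mulr0.
have hxro : ip x ropt = 0 by move: hxo; rewrite /xopt ipDl hdo addr0.
have hQt v : ip x v = 0 -> hc Q *m v = v.
  by move=> h; rewrite /Q hcB hc1 mulmxBl mul1mx hPv h mulr0 scale0r subr0.
have hQro : hc Q *m ropt = ropt by apply: hQt.
have hso : ip s ropt = 0.
  by rewrite -hQro -hv1o /v1 ip_mull.
have hSb w : hc S *m w = 0 -> ip (S *m b) w = 0 by move=> h; rewrite ip_mull h ip0r.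
have hsp w : hc S *m w = 0 -> ip s w = ip p w by move=> h; rewrite /s ipDl hSb // addr0.
split; last first.
  move=> hxx; exfalso.
  have e : ropt = r by rewrite /ropt hxx.
  move: hso; rewrite e hsp // => h.
  by move: hpr; rewrite -/r h eqxx.
move=> hne hPh hqs.
have ha0 : alpha != 0.
  by apply: contra hne => /eqP a0; apply/eqP; rewrite /xopt /d a0 scale0r addr0.
have hSo : hc S *m ropt = 0.
  have h3 db : ip ropt (Q *m (S *m db)) = 0.
    have : alpha * ip ropt (Q *m (S *m db)) = 0.
      apply: Re_all => z; have := h2 (z *: db).
      by rewrite -!scalemxAr ipZr mulrCA.
    by move/eqP; rewrite mulf_eq0 (negbTE ha0) /= => /eqP.
  apply: ip_self0; have := h3 (hc S *m ropt).
  by move/(congr1 conjc); rewrite ip_conj conjc0 ip_mull hQro ip_mull.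
have hpo : ip p ropt = 0 by rewrite -hsp.
have horth : orth_span x p S s d ropt by split.
split => //.
rewrite /formulas.
have hPhR : conjc Ph = Ph by rewrite /Ph -[qf _ _]/(Bf _ _ _) Bf_conj hcPhi.
have hPhi_inv : conjc (Ph^-1) = Ph^-1 by rewrite conjc_inv hPhR.
have hQx : Q *m x = 0.
  by rewrite /Q mulmxBl mul1mx (Pv x) -qfE mulVf // scale1r subrr.
have hQQ (v : 'cV[R[i]]_n) : Q *m (Q *m v) = Q *m v.
  have hQv : Q *m v = v - (Ph^-1 * ip x (Phm *m v)) *: x by rewrite /Q mulmxBl mul1mx (Pv v).
  by rewrite [in LHS]hQv mulmxBr -scalemxAr hQx scaler0 subr0.
have hF : hc F = F := hcF hA mu.
have hQh : hc Q = 1%:M - hc P by rewrite /Q hcB hc1.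
have hFc : Fc = hc Q *m F *m Q by rewrite /Fc /Fcheck hQh.
have hFcv (u : 'cV[R[i]]_n) : Fc *m u = hc Q *m (F *m (Q *m u)) by rewrite hFc -!mulmxA.
have hFcH : hc Fc = Fc by rewrite hFc !hcM hcK hF mulmxA.
have hQd : Q *m d = d by rewrite /d -scalemxAr hQQ.
have hqd : qf F x = (mu - rx)%:C * Ph.
  have : qf F x - qf F0 x = (mu - rx)%:C * Ph.
    by rewrite -![qf _ _]/(Bf _ _ _) -BMB /F /F0 Fdiff BMZ.
  by rewrite hq0 subr0.
have hxFd : ip x (F *m d) = - ((mu - rx)%:C * Ph).
  move: hxro; rewrite hropt /xopt mulmxDr ipDr -qfE hqd => /eqP.
  by rewrite addrC addr_eq0 => /eqP.
have hcd : ropt - r = Fc *m d.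
  rewrite hFcv hQd hQh mulmxBl mul1mx hPv hPhi_inv hxFd.
  have -> : Ph^-1 * - ((mu - rx)%:C * Ph) = - (mu - rx)%:C.
    by rewrite mulrN mulrC mulfK.
  rewrite scaleNr opprK scalemxAl -Fdiff mulmxBl hropt /xopt mulmxDr hr.
  by rewrite [RHS]addrCA addrA.
have hqFd : qf F d = (mu - rx)%:C * Ph.
  have e1 : ip d (F *m x) = - ((mu - rx)%:C * Ph).
    by rewrite -ip_conj ip_mull hF hxFd conjcN' conjcM' conjc_realE hPhR.
  move: hdo; rewrite hropt /xopt mulmxDr ipDr e1 -qfE => /eqP.
  by rewrite addrC addr_eq0 opprK => /eqP.
have hv1F : ip v1 (F *m v1) = qf Fc s.
  by rewrite qfE hFcv -ip_mull.
have e2 : ip v1 (ropt - r) = - ip p r.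
  rewrite ipBr hv1o sub0r; congr (- _).
  by rewrite /v1 ip_mull (hQt r hxr0) (hsp r hSr).
have e3 : ip v1 (Fc *m d) = alpha * qf Fc s.
  by rewrite /d -scalemxAr ipZr hFcv -ip_mull hQQ hv1F.
have K1 : alpha * qf Fc s = - ip p r by rewrite -e3 -hcd e2.
have hqF2 : qf F d = conjc alpha * (- ip p r).
  by rewrite qfE /d -scalemxAr ipZl ipZr hv1F K1.
have hqF3 : qf F d = alpha * (- ip r p).
  have : conjc (qf F d) = qf F d by rewrite hqFd conjcM' conjc_realE hPhR.
  by rewrite {1}hqF2 conjcM' conjcK conjcN' ip_conj => <-.
have hrp : ip r p != 0 by rewrite -ip_conj conjc_eq0.
have ha1 : alpha = - ip p r / qf Fc s by rewrite -K1 mulfK.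
split.
- split => //.
  by rewrite hqF3 mulrN opprK mulfK.
- split; last by rewrite hqFd mulfK.
  apply: (mulIf hPh); rewrite -hqFd hqF3 normCK' ip_conj ha1.
  by field; rewrite hqs hPh.
- exact: hcd.
move=> X [hMXM _ _ _].
have hFcv1 : Fc *m v1 = Fc *m s by rewrite !hFcv hQQ.
have hSFs : hc S *m (Fc *m s) = 0.
  have : hc S *m (Fc *m d) = 0 by rewrite -hcd mulmxBr hSo hSr subr0.
  rewrite /d -scalemxAr hFcv1 -scalemxAr => /eqP.
  by rewrite scaler_eq0 (negbTE ha0) /= => /eqP.
have ip_mulr k' (M' : 'M[R[i]]_(n,k')) (u : 'cV[R[i]]_n) (z : 'cV[R[i]]_k') : ip u (M' *m z) = ip (hc M' *m u) z.
  by rewrite ip_mull hcK.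
have hFcm (u z : 'cV[R[i]]_n) : ip u (Fc *m z) = ip (Fc *m u) z by rewrite ip_mull hFcH.
set M := hc S *m Fc *m S in hMXM *.
exists (b + X *m hc S *m Fc *m p); split.
  by rewrite addrCA addNr addr0.
set v := b + X *m hc S *m Fc *m p.
have hMv : M *m v = 0.
  have e : hc S *m Fc *m p = - (M *m b).
    apply/eqP; rewrite -addr_eq0; apply/eqP; move: hSFs.
    by rewrite /M /s mulmxDr mulmxDr !mulmxA.
  have e' : X *m hc S *m Fc *m p = X *m (hc S *m Fc *m p) by rewrite !mulmxA.
  by rewrite /v e' e mulmxN mulmxDr mulmxN (mulmxA M X) (mulmxA (M *m X) M) hMXM subrr.
have hSw : hc S *m (Fc *m S *m v) = 0 by rewrite mulmxA mulmxA; exact: hMv.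
have hsw : ip s (Fc *m S *m v) = 0.
  by rewrite -mulmxA hFcm ip_mulr hSFs ip0l.
split.
- by rewrite -mulmxA hFcm hFcv hQx !mulmx0 ip0l.
- by rewrite -hsp.
- exact: hSw.
- exact: hsw.
- by rewrite /d ipZl -mulmxA hFcm hFcv1 -hFcm mulmxA hsw mulr0.
Qed.
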